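(* Let $G$ be a finite simple connected graph with at least one edge, let $W$ be a minimal vertex cover of $G$, and let $s\ge 0$. Let $f=\prod_{y\in V(G)\setminus W} y^{(0)}\in\mathcal{J}_s(R)$. Then $$\langle \mathcal{J}_s(W)\rangle = \mathcal{J}_s(I(G)) : f^{\infty}.$$
   Context: $R=k[x_1,\dots,x_n]$ over a field $k$, with the vertices of $G$ identified with the variables. The edge ideal is $I(G)=\langle x_ix_j : \{x_i,x_j\}\in E(G)\rangle$. A vertex cover is a set of vertices meeting every edge; minimal if no proper subset is a vertex cover. $\mathcal{J}_s(R)=k[x_i^{(l)} : 1\le i\le n,\ 0\le l\le s]$. For $I=\langle f_1,\dots,f_r\rangle\subseteq R$, write $f_m(x_1^{(0)}+x_1^{(1)}t+\cdots+x_1^{(s)}t^s,\dots)\equiv\sum_{l=0}^s\alpha_m^{(l)}t^l \pmod{t^{s+1}}$; then $\mathcal{J}_s(I)=\langle\alpha_m^{(l)}\rangle\subseteq\mathcal{J}_s(R)$. For $W\subseteq V(G)$, $\mathcal{J}_s(W)=\{x^{(j)} : x\in W,\ 0\le j\le s\}$. The saturation is $I:f^\infty=\{g : gf^N\in I \text{ for some } N\ge 0\}$. *)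

(* Defs.v *)
From HB Require Import structures.
From mathcomp Require Import all_boot all_order all_algebra.
From mathcomp Require Import mpoly.

Set Implicit Arguments.
Unset Strict Implicit.
Unset Printing Implicit Defensive.

Import GRing.Theory.
Local Open Scope ring_scope.

Definition simple_graph (n : nat) (adj : rel 'I_n) : Prop :=
  (forall i j : 'I_n, adj i j = adj j i) /\ (forall i : 'I_n, adj i i = false).

Definition connected_graph (n : nat) (adj : rel 'I_n) : Prop :=
  forall i j : 'I_n, connect adj i j.

Definition has_edge (n : nat) (adj : rel 'I_n) : Prop :=
  exists i j : 'I_n, adj i j.

Definition is_vertex_cover (n : nat) (adj : rel 'I_n) (W : {set 'I_n}) : Prop :=
  forall i j : 'I_n, adj i j -> (i \in W) || (j \in W).

Definition is_minimal_vertex_cover (n : nat) (adj : rel 'I_n) (W : {set 'I_n}) :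
  Prop :=
  is_vertex_cover adj W /\
  forall W' : {set 'I_n}, W' \proper W -> ~ is_vertex_cover adj W'.

Definition in_ideal_gen (A : comNzRingType) (S : A -> Prop) (g : A) : Prop :=
  exists r : seq (A * A),
    (forall p, p \in r -> S p.2) /\ g = \sum_(p <- r) p.1 * p.2.

Definition in_saturation (A : comNzRingType) (I : A -> Prop) (f g : A) : Prop :=
  exists N : nat, I (g * f ^+ N).

(* R = k[x_0,...,x_{n-1}] is {mpoly k[n]};
   J_s(R) = k[x_i^(l) : i < n, l <= s] is {mpoly k[n * s.+1]},
   the variable x_i^(l) being 'X_(jvar i l). *)
Definition jvar (n s : nat) (i : 'I_n) (l : 'I_s.+1) : 'I_(n * s.+1) :=
  mxvec_index i l.

Definition jX (k : fieldType) (n s : nat) (i : 'I_n) (l : 'I_s.+1)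
  : {mpoly k[n * s.+1]} := 'X_(jvar i l).

(* f(x_1^(0) + x_1^(1) t + ... + x_1^(s) t^s, ...) as a polynomial in t
   with coefficients in J_s(R). *)
Definition jet_subst (k : fieldType) (n s : nat) (f : {mpoly k[n]})
  : {poly {mpoly k[n * s.+1]}} :=
  mmap (fun c : k => (c%:MP)%:P)
       (fun i : 'I_n => \sum_(l < s.+1) (jX k i l)%:P * 'X^l) f.

(* alpha^(l) : the coefficient of t^l (l <= s), i.e. of the class mod t^{s+1}. *)
Definition jet_coef (k : fieldType) (n s : nat) (f : {mpoly k[n]}) (l : 'I_s.+1)
  : {mpoly k[n * s.+1]} := (@jet_subst k n s f)`_l.

Definition jet_gens (k : fieldType) (n s : nat) (gens : {mpoly k[n]} -> Prop)
  (a : {mpoly k[n * s.+1]}) : Prop :=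
  exists (f : {mpoly k[n]}) (l : 'I_s.+1), gens f /\ a = @jet_coef k n s f l.

Definition edge_gens (k : fieldType) (n : nat) (adj : rel 'I_n)
  (f : {mpoly k[n]}) : Prop :=
  exists i j : 'I_n, adj i j /\ f = 'X_i * 'X_j.

Definition jet_edge_ideal (k : fieldType) (n s : nat) (adj : rel 'I_n)
  : {mpoly k[n * s.+1]} -> Prop :=
  in_ideal_gen (@jet_gens k n s (@edge_gens k n adj)).

Definition jet_vars (k : fieldType) (n s : nat) (W : {set 'I_n})
  (a : {mpoly k[n * s.+1]}) : Prop :=
  exists (i : 'I_n) (l : 'I_s.+1), i \in W /\ a = jX k i l.

Definition compl_prod (k : fieldType) (n s : nat) (W : {set 'I_n})
  : {mpoly k[n * s.+1]} :=
  \prod_(y in ~: W) jX k y ord0.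

(* Main.v *)
Require Import Defs.
From HB Require Import structures.
From mathcomp Require Import all_boot all_order all_algebra.
From mathcomp Require Import mpoly.
From Stdlib Require Import Classical.
From mathcomp Require Import ring.
Import GRing.Theory.
Local Open Scope ring_scope.

Section Ideal.
Variables (A : comNzRingType) (S : A -> Prop).
Local Notation I := (in_ideal_gen S).

Lemma ideal0 : I 0.
Proof. by exists [::]; rewrite big_nil. Qed.

Lemma idealD a b : I a -> I b -> I (a + b).
Proof.
move=> [r1 [H1 ->]] [r2 [H2 ->]]; exists (r1 ++ r2); split; last by rewrite big_cat.
by move=> p; rewrite mem_cat => /orP [/H1|/H2].
Qed.

Lemma idealM a b : I b -> I (a * b).
Proof.
move=> [r [H ->]]; exists [seq (a * p.1, p.2) | p <- r]; split.
  by move=> p /mapP [q /H Hq ->].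
by rewrite big_map mulr_sumr; apply: eq_bigr => p _; rewrite mulrA.
Qed.

Lemma idealS x : S x -> I x.
Proof. by move=> Sx; exists [:: (1, x)]; split; [move=> p; rewrite inE => /eqP ->|rewrite big_seq1 mul1r]. Qed.

Lemma idealB a b : I a -> I b -> I (a - b).
Proof. by move=> Ha Hb; apply: idealD => //; rewrite -mulN1r; apply: idealM. Qed.

Lemma ideal_sum (T : Type) (r : seq T) (P : pred T) (F : T -> A) :
  (forall i, P i -> I (F i)) -> I (\sum_(i <- r | P i) F i).
Proof. by move=> H; apply: big_ind => //; [exact: ideal0| exact: idealD]. Qed.

End Ideal.

Lemma ideal_sub (A : comNzRingType) (S T : A -> Prop) x : (forall y, S y -> in_ideal_gen T y) -> in_ideal_gen S x ->
  in_ideal_gen T x.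
Proof.
move=> HT [r [H ->]]; rewrite big_seq; apply: big_ind.
- exact: ideal0.
- exact: idealD.
- by move=> p /H /HT; apply: idealM.
Qed.

Section Jet.
Variables (k : fieldType) (n s : nat) (W : {set 'I_n}).
Local Notation N := (n * s.+1)%N.
Local Notation MP := {mpoly k[N]}.

Lemma jvar_inj (i i' : 'I_n) (l l' : 'I_s.+1) :
  jvar i l = jvar i' l' -> i = i' /\ l = l'.
Proof.
rewrite /jvar /mxvec_index => /cast_ord_inj /enum_rank_inj [-> ->]; by [].
Qed.

Definition PW (v : 'I_N) : bool :=
  [exists i : 'I_n, exists l : 'I_s.+1, (i \in W) && (v == jvar i l)].

Definition Q (g : MP) : Prop :=
  forall m, g@_m != 0 -> exists2 v, PW v & (0 < m v)%N.

Lemma Q0 : Q 0.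
Proof. by move=> m; rewrite mcoeff0 eqxx. Qed.

Lemma QD a b : Q a -> Q b -> Q (a + b).
Proof.
move=> Ha Hb m; rewrite mcoeffD.
case: (eqVneq a@_m 0) => [->|/Ha //]; rewrite add0r; exact: Hb.
Qed.

Lemma coef_mulX (a : MP) u m : (a * 'X_[u])@_m != 0 -> (u <= m)%MM.
Proof.
rewrite {1}(mpolyE a) mulr_suml raddf_sum /=.
apply: contraR => Hum; apply/eqP; apply: big1 => m' _.
rewrite -scalerAl -mpolyXD mcoeffZ mcoeffX.
have [E|] := eqVneq (m' + u)%MM m; last by rewrite mulr0.
by case/negP: Hum; rewrite -E addmC lem_addr.
Qed.

Lemma Q_mulXv (a : MP) v : PW v -> Q (a * 'X_v).
Proof.
move=> Pv m /coef_mulX /mnm_lepP /(_ v); rewrite mnm1E eqxx => H.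
by exists v.
Qed.

Lemma Q_ideal g : in_ideal_gen (@jet_vars k n s W) g -> Q g.
Proof.
move=> [r [H ->]]; rewrite big_seq; apply: big_ind; [exact: Q0|exact: QD|].
move=> p /H [i [l [iW ->]]]; apply: Q_mulXv.
by apply/existsP; exists i; apply/existsP; exists l; rewrite iW eqxx.
Qed.

Lemma ideal_Q g : Q g -> in_ideal_gen (@jet_vars k n s W) g.
Proof.
move=> Hg; rewrite (mpolyE g); apply: ideal_sum => m _.
case: (eqVneq g@_m 0) => [->|/Hg [v Pv mv]].
  by rewrite scale0r; exact: ideal0.
move/existsP: Pv => [i /existsP [l /andP [iW /eqP Ev]]].
have le : (U_(v) <= m)%MM.
  by apply/mnm_lepP => j; rewrite mnm1E; case: eqP => // <-.
rewrite -(submK le) mpolyXD scalerAl; apply: idealM; apply: idealS.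
by exists i, l; split => //; rewrite /jX -Ev.
Qed.

Lemma Q_mulX (g : MP) u : ~~ PW u -> Q (g * 'X_u) -> Q g.
Proof.
move=> Pu Hg m gm; have := Hg (U_(u) + m)%MM; rewrite mcoeffMX => /(_ gm).
case=> v Pv; rewrite mnmDE mnm1E; case: (eqVneq u v) => [E|_ /=].
  by move: Pu; rewrite E Pv.
by exists v.
Qed.

Lemma notPW y : y \notin W -> ~~ PW (jvar y ord0).
Proof.
move=> yW; apply/existsP => [[i /existsP [l /andP [iW /eqP /jvar_inj [E _]]]]].
by move: yW; rewrite E iW.
Qed.

Lemma Q_mulf (g : MP) : Q (g * @compl_prod k n s W) -> Q g.
Proof.
rewrite /compl_prod -big_enum.
have : forall y, y \in enum (~: W) -> y \notin W.
  by move=> y; rewrite mem_enum inE.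
elim: (enum (~: W)) g => [|y r IH] g Hr; first by rewrite big_nil mulr1.
rewrite big_cons => H; apply: (IH g) => [z zr|]; first by apply: Hr; rewrite inE zr orbT.
apply: (@Q_mulX _ (jvar y ord0)); first by apply: notPW; apply: Hr; rewrite inE eqxx.
by move: H; rewrite /= /jX mulrCA mulrC.
Qed.

Lemma Q_mulfN (g : MP) M : Q (g * @compl_prod k n s W ^+ M) -> Q g.
Proof.
elim: M g => [|M IH] g; first by rewrite expr0 mulr1.
by rewrite exprSr mulrA => /Q_mulf /IH.
Qed.

End Jet.

Section Jet2.
Variables (k : fieldType) (n s : nat).
Local Notation N := (n * s.+1)%N.
Local Notation MP := {mpoly k[N]}.

Definition Ps (i : 'I_n) : {poly MP} := \sum_(l < s.+1) (jX k i l)%:P * 'X^l.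

Lemma jet_subst_XX (i j : 'I_n) : @jet_subst k n s ('X_i * 'X_j) = Ps i * Ps j.
Proof.
rewrite /jet_subst -mpolyXD /mmap msuppX big_seq1 mcoeffX eqxx mpolyC1 polyC1 mul1r.
rewrite commr_mmap1_M ?mmap1U //.
by move=> ? ?; apply: mulrC.
Qed.

Lemma Ps_coef i a : (Ps i)`_a = if (a < s.+1)%N then jX k i (inord a) else 0.
Proof.
rewrite /Ps coef_sum.
under eq_bigr do rewrite coefCM coefXn.
case: ltnP => ha.
  rewrite (bigD1 (inord a)) //= inordK // eqxx mulr1 big1 ?addr0 // => l nl.
  case: eqP => [E|]; last by rewrite mulr0.
  by case/eqP: nl; apply: val_inj; rewrite /= inordK // E.
apply: big1 => l _; case: eqP => [E|]; last by rewrite mulr0.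
by move: (ltn_ord l); rewrite -E ltnNge ha.
Qed.

Lemma jet_coef_XX (i j : 'I_n) l :
  @jet_coef k n s ('X_i * 'X_j) l = \sum_(a < l.+1) (Ps i)`_a * (Ps j)`_(l - a).
Proof. by rewrite /jet_coef jet_subst_XX coefM. Qed.

End Jet2.

Section Jet3.
Variables (k : fieldType) (n s : nat).
Definition cj (i : 'I_n) (a : nat) : {mpoly k[n * s.+1]} :=
  if (a < s.+1)%N then jX k i (inord a) else 0.

Lemma jet_coef_XX' (i j : 'I_n) l :
  @jet_coef k n s ('X_i * 'X_j) l = \sum_(a < l.+1) cj i a * cj j (l - a).
Proof.
rewrite jet_coef_XX; apply: eq_bigr => a _.
by congr (_ * _); apply: Ps_coef.
Qed.
End Jet3.

Section Main.
Variables (k : fieldType) (n s : nat) (adj : rel 'I_n) (W : {set 'I_n}).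
Local Notation N := (n * s.+1)%N.
Local Notation MP := {mpoly k[N]}.
Local Notation J := (@jet_edge_ideal k n s adj).
Local Notation IW := (in_ideal_gen (@jet_vars k n s W)).
Local Notation f := (@compl_prod k n s W).

Lemma gen_sub_W : is_vertex_cover adj W ->
  forall y, @jet_gens k n s (@edge_gens k n adj) y -> IW y.
Proof.
move=> cov y [g [l [[i [j [aij E1]]] E2]]]; subst y g.
have -> := @jet_coef_XX' k n s i j l.
apply: ideal_sum => a _; rewrite /cj.
case/orP: (cov i j aij) => [iW|jW].
  case: (a < s.+1)%N; last by rewrite mul0r; exact: ideal0.
  rewrite mulrC; apply: idealM; apply: idealS; by exists i, (inord a).
case: (l - a < s.+1)%N; last by rewrite mulr0; exact: ideal0.
apply: idealM; apply: idealS; by exists j, (inord (l - a)).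
Qed.

Lemma neighbor i : simple_graph adj -> is_minimal_vertex_cover adj W -> i \in W ->
  exists y, y \notin W /\ adj i y.
Proof.
move=> [sym irr] [cov min] iW; apply: NNPP => Hn.
have nb : forall z, adj i z -> z \in W.
  by move=> z iz; apply/negPn/negP => zW; apply: Hn; exists z.
apply: (min _ (properD1 iW)) => a b ab; rewrite !in_setD1.
case: (eqVneq a i) => [ai|ai].
  subst a; rewrite /= (nb b ab) andbT.
  by apply/eqP => bi; move: ab; rewrite bi irr.
case: (eqVneq b i) => [bi|bi].
  by rewrite /= orbF; apply: nb; rewrite -bi sym.
by rewrite /=; exact: cov a b ab.
Qed.

Lemma helper1 (A : comNzRingType) (S X y0 : A) l :
  X * y0 ^+ l.+1 = y0 ^+ l * (S + X * y0) - S * y0 ^+ l.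
Proof. by rewrite exprS; ring. Qed.

Lemma helper2 (A : comNzRingType) (P Q y0 : A) a r :
  P * Q * (y0 ^+ a * y0 ^+ r) = (Q * y0 ^+ r) * (P * y0 ^+ a).
Proof. by ring. Qed.

Lemma key i y : adj i y -> forall l, (l < s.+1)%N ->
  J (jX k i (inord l) * jX k y ord0 ^+ l.+1).
Proof.
move=> iy; elim/ltn_ind => l IH hl.
have i0 : inord 0 = ord0 :> 'I_s.+1 by apply: val_inj; rewrite /= inordK.
have Hc : J (@jet_coef k n s ('X_i * 'X_y) (inord l)).
  by apply: idealS; exists ('X_i * 'X_y), (inord l); split => //; exists i, y.
move: Hc; have -> := @jet_coef_XX' k n s i y (inord l).
rewrite inordK // big_ord_recr /= subnn.
have c1 : cj k n s i l = jX k i (inord l) by rewrite /cj hl.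
have c0 : cj k n s y 0 = jX k y ord0 by rewrite /cj /= i0.
rewrite c1 c0.
set Sum := \sum_(a < l) _.
move: IH; move: (jX k i (inord l)) (jX k y ord0) => X y0 IH Hc.
rewrite (@helper1 _ Sum X y0 l).
apply: idealB; first by apply: idealM.
rewrite /Sum mulr_suml; apply: ideal_sum => a _ /=.
have al : (a < l)%N := ltn_ord a.
have as1 : (a < s.+1)%N by apply: ltn_trans hl.
have las : (l - a < s.+1)%N by apply: leq_ltn_trans hl; apply: leq_subr.
have c2 : cj k n s i a = jX k i (inord a) by rewrite /cj as1.
have c3 : cj k n s y (l - a) = jX k y (inord (l - a)) by rewrite /cj las.
rewrite c2 c3.
have E : y0 ^+ l = y0 ^+ a.+1 * y0 ^+ (l - a.+1) by rewrite -exprD subnKC.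
rewrite E helper2.
by apply: idealM; apply: IH.
Qed.

End Main.

Lemma helper4 (A : comNzRingType) (a b c F : A) M1 M2 :
  (a * b + c) * (F ^+ M1 * F ^+ M2) = a * F ^+ M2 * (b * F ^+ M1) + F ^+ M1 * (c * F ^+ M2).
Proof. by ring. Qed.

Lemma gen_sat (k : fieldType) (n : nat) (adj : rel 'I_n) (W : {set 'I_n}) (s : nat) :
  simple_graph adj -> is_minimal_vertex_cover adj W ->
  forall x, @jet_vars k n s W x ->
  exists M, @jet_edge_ideal k n s adj (x * @compl_prod k n s W ^+ M).
Proof.
move=> sg mvc x [i [l [iW ->]]].
have [y [yW iy]] := @neighbor _ _ _ i sg mvc iW.
have := @key k n s adj _ _ iy _ (ltn_ord l); rewrite inord_val => H.
exists l.+1; rewrite /compl_prod (bigD1 y) ?inE //=.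
rewrite exprMn mulrA mulrC; exact: idealM.
Qed.

Theorem mainTheorem2 (k : fieldType) (n : nat) (adj : rel 'I_n)
  (W : {set 'I_n}) (s : nat) :
  simple_graph adj -> connected_graph adj -> has_edge adj ->
  is_minimal_vertex_cover adj W ->
  forall g : {mpoly k[n * s.+1]},
    in_ideal_gen (@jet_vars k n s W) g <->
    in_saturation (@jet_edge_ideal k n s adj) (@compl_prod k n s W) g.
Proof.
move=> sg _ _ mvc g; split.
  move=> [r [H ->]]; elim: r H => [|p r IHr] H.
    by exists 0%N; rewrite big_nil mul0r; exact: ideal0.
  have [M1 H1] := @gen_sat k n adj W s sg mvc _ (H p (mem_head _ _)).
  have [M2 H2] : exists M, @jet_edge_ideal k n s adj
      ((\sum_(q <- r) q.1 * q.2) * @compl_prod k n s W ^+ M).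
    by apply: IHr => q qr; apply: H; rewrite inE qr orbT.
  exists (M1 + M2)%N; rewrite big_cons exprD helper4.
  by apply: idealD; apply: idealM.
move=> [M HM]; apply: ideal_Q; apply: (@Q_mulfN _ _ _ _ _ M); apply: Q_ideal.
apply: ideal_sub HM; exact: gen_sub_W mvc.1.
Qed.
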